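(* Let $(\chi_n)_{n\in\mathbb N}$ be independent Bernoulli random variables with $\mathbb P(\chi_n=1)=p\in(0,1)$. Let $N\ge1$ and let $c$ be a finitely supported real function on the set of multi-indices $\alpha=(\alpha_1,\dots,\alpha_N)\in\mathbb N^N$ with $1\le\alpha_1<\dots<\alpha_N$. Set $\Psi_N(c^2)=\sum_{|\alpha|=N}c(\alpha)^2\chi^\alpha$ with $\chi^\alpha=\prod_{i=1}^N\chi_{\alpha_i}$, $|c|_N^2=\sum_{|\alpha|=N}c(\alpha)^2$ and $\delta_N^2(c)=\max_n\sum_{|\alpha|=N,\,n\in\{\alpha_1,\dots,\alpha_N\}}c(\alpha)^2$, and assume $\delta_N(c)>0$. If $x<(p/2)^N|c|_N^2$, then $$\mathbb P(\Psi_N(c^2)\le x)\le\frac{2e^3}{9}N\exp\Big(-\frac{x^2}{\delta_N^2(c)|c|_N^2}\Big).$$ *)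

(* Defs.v *)
From Stdlib Require Import Reals Lra List Sorted.
Import ListNotations.
Open Scope R_scope.

(* Since c is finitely supported, Psi_N(c^2) depends only on chi_1,...,chi_M for
   any M bounding the support of c.  We therefore model the i.i.d. Bernoulli(p)
   sequence through its finite-dimensional marginal on {0,1}^M: an outcome is a
   list of booleans [w] of length M, with chi_n = 1 iff the (n-1)-th entry is true. *)

Fixpoint bool_lists (M : nat) : list (list bool) :=
  match M with
  | O => [[]]
  | S m => map (cons true) (bool_lists m) ++ map (cons false) (bool_lists m)
  end.

Fixpoint weight (p : R) (w : list bool) : R :=
  match w with
  | [] => 1
  | b :: w' => (if b then p else 1 - p) * weight p w'
  end.

Definition sumR (l : list R) : R := fold_right Rplus 0 l.

Fixpoint sublists (k : nat) (l : list nat) : list (list nat) :=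
  match k, l with
  | O, _ => [[]]
  | S _, [] => []
  | S k', x :: l' => map (cons x) (sublists k' l') ++ sublists k l'
  end.

Definition multi_indices (N M : nat) : list (list nat) := sublists N (seq 1 M).

Definition valid_index (N : nat) (a : list nat) : Prop :=
  Sorted lt a /\ length a = N /\ (forall i, In i a -> (1 <= i)%nat).

Definition chi (w : list bool) (n : nat) : R :=
  if nth (n - 1) w false then 1 else 0.

Definition chi_alpha (w : list bool) (a : list nat) : R :=
  fold_right (fun i acc => chi w i * acc) 1 a.

Definition Psi (N M : nat) (c : list nat -> R) (w : list bool) : R :=
  sumR (map (fun a => (c a)^2 * chi_alpha w a) (multi_indices N M)).

Definition normc2 (N M : nat) (c : list nat -> R) : R :=
  sumR (map (fun a => (c a)^2) (multi_indices N M)).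

(* delta_N^2(c) = max_n sum_{a containing n} c(a)^2 (n ranges over 1..M; the
   sums for n > M vanish and all sums are >= 0). *)
Definition delta2 (N M : nat) (c : list nat -> R) : R :=
  fold_right Rmax 0
    (map (fun n => sumR (map (fun a => (c a)^2)
                        (filter (fun a => existsb (Nat.eqb n) a) (multi_indices N M))))
         (seq 1 M)).

Definition deltaN (N M : nat) (c : list nat -> R) : R := sqrt (delta2 N M c).

Definition prob_Psi_le (p : R) (N M : nat) (c : list nat -> R) (x : R) : R :=
  sumR (map (fun w => weight p w * (if Rle_dec (Psi N M c w) x then 1 else 0))
            (bool_lists M)).

(* Main.v *)
Require Import Defs.
From Stdlib Require Import Reals Lra Lia List Sorted.
Import ListNotations.
From Coquelicot Require Import Coquelicot.
Open Scope R_scope.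

Lemma exp_le (a b : R) : a <= b -> exp a <= exp b.
Proof. intros [H|H]; [left; apply exp_increasing; exact H| subst; lra]. Qed.

Lemma hoeff (p t : R) : 0 < p < 1 -> 0 <= t ->
  p * exp (- t) + (1 - p) <= exp (- p * t + t ^ 2 / 4).
Proof.
  intros Hp Ht.
  set (D := fun s => 1 - p + p * exp (- s)).
  assert (HD : forall s, 0 < D s).
  { intro s; unfold D; pose proof (exp_pos (- s)); nra. }
  set (h := fun s => - p * s + s ^ 2 / 4 - ln (D s)).
  set (h1 := fun s => - p + s / 2 + p * exp (- s) / D s).
  set (h2 := fun s => / 2 - p * (1 - p) * exp (- s) / (D s) ^ 2).
  assert (Dh : forall s, derivable_pt_lim h s (h1 s)).
  { intro s. apply is_derive_Reals. unfold h, h1, D.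
    pose proof (HD s) as H; unfold D in H.
    auto_derive; [lra|]. field. lra. }
  assert (Dh1 : forall s, derivable_pt_lim h1 s (h2 s)).
  { intro s. apply is_derive_Reals. unfold h1, h2, D.
    pose proof (HD s) as H; unfold D in H.
    auto_derive; [lra|]. field. lra. }
  assert (H2 : forall s, 0 <= h2 s).
  { intro s; unfold h2. pose proof (HD s) as H. pose proof (exp_pos (-s)).
    assert (p * (1 - p) * exp (- s) <= (D s)^2 / 4).
    { unfold D in *. pose proof (pow2_ge_0 (1 - p - p * exp (- s))). nra. }
    assert (p * (1 - p) * exp (- s) / D s ^ 2 <= / 4).
    { assert (0 < D s ^ 2) by nra.
      unfold Rdiv. apply Rmult_le_reg_r with (D s ^ 2); [lra|].
      rewrite Rmult_assoc, Rinv_l by lra. lra. }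
    lra. }
  assert (H10 : h1 0 = 0).
  { unfold h1, D. rewrite Ropp_0, exp_0. field; lra. }
  assert (H1 : forall s, 0 <= s -> 0 <= h1 s).
  { intros s Hs. destruct (Req_dec s 0) as [->|Hs0]; [lra|].
    destruct (MVT_cor2 h1 h2 0 s) as [c0 [Hc _]]; [lra| intros; apply Dh1|].
    pose proof (H2 c0). nra. }
  assert (H0 : 0 <= h t).
  { destruct (Req_dec t 0) as [->|Ht0].
    - unfold h, D. rewrite Ropp_0, exp_0. replace (1 - p + p * 1) with 1 by ring.
      rewrite ln_1. lra.
    - destruct (MVT_cor2 h h1 0 t) as [c0 [Hc Hc']]; [lra| intros; apply Dh|].
      pose proof (H1 c0 ltac:(lra)).
      assert (h 0 = 0).
      { unfold h, D. rewrite Ropp_0, exp_0. replace (1 - p + p * 1) with 1 by ring.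
        rewrite ln_1. lra. }
      nra. }
  unfold h in H0.
  replace (p * exp (- t) + (1 - p)) with (exp (ln (D t))).
  2:{ rewrite exp_ln by apply HD. unfold D; ring. }
  apply exp_le. lra.
Qed.


Definition E (p : R) (M : nat) (f : list bool -> R) : R :=
  sumR (map (fun w => weight p w * f w) (bool_lists M)).

Lemma sumR_app l1 l2 : sumR (l1 ++ l2) = sumR l1 + sumR l2.
Proof. induction l1; simpl; [ring|rewrite IHl1; ring]. Qed.

Lemma sumR_scal {A} (a : R) (f : A -> R) l :
  sumR (map (fun x => a * f x) l) = a * sumR (map f l).
Proof. induction l; simpl; [ring|rewrite IHl; ring]. Qed.

Lemma sumR_plus {A} (f g : A -> R) l :
  sumR (map (fun x => f x + g x) l) = sumR (map f l) + sumR (map g l).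
Proof. induction l; simpl; [ring|rewrite IHl; ring]. Qed.

Lemma sumR_ext {A} (f g : A -> R) l :
  (forall x, In x l -> f x = g x) -> sumR (map f l) = sumR (map g l).
Proof. induction l; simpl; intros H; [ring|]. rewrite H, IHl; auto. Qed.

Lemma sumR_le {A} (f g : A -> R) l :
  (forall x, In x l -> f x <= g x) -> sumR (map f l) <= sumR (map g l).
Proof. induction l; simpl; intros H; [lra|].
  pose proof (H a (or_introl eq_refl)). pose proof (IHl (fun x Hx => H x (or_intror Hx))). lra. Qed.

Lemma sumR_nonneg {A} (f : A -> R) l :
  (forall x, In x l -> 0 <= f x) -> 0 <= sumR (map f l).
Proof. induction l; simpl; intros H; [lra|].
  pose proof (H a (or_introl eq_refl)). pose proof (IHl (fun x Hx => H x (or_intror Hx))). lra. Qed.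

Lemma sumR_zero {A} l : sumR (map (fun _ : A => 0) l) = 0.
Proof. induction l; simpl; [ring|rewrite IHl; ring]. Qed.

Lemma E_S p M f : E p (S M) f =
  p * E p M (fun w => f (true :: w)) + (1 - p) * E p M (fun w => f (false :: w)).
Proof.
  unfold E; simpl. rewrite map_app, sumR_app, !map_map. simpl.
  rewrite <- !sumR_scal. f_equal; f_equal; apply map_ext; intros; ring.
Qed.

Lemma weight_nonneg p w : 0 <= p <= 1 -> 0 <= weight p w.
Proof. intros Hp; induction w as [|b w IH]; simpl; [lra|].
  destruct b; apply Rmult_le_pos; lra. Qed.

Lemma E_mono p M f g : 0 <= p <= 1 -> (forall w, f w <= g w) -> E p M f <= E p M g.
Proof. intros Hp H; unfold E; apply sumR_le; intros w _.
  apply Rmult_le_compat_l; [apply weight_nonneg; auto| apply H]. Qed.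

Lemma E_const p M a : E p M (fun _ => a) = a.
Proof. induction M; [unfold E; simpl; ring|].
  rewrite E_S, IHM. ring. Qed.

Lemma E_scal p M a f : E p M (fun w => a * f w) = a * E p M f.
Proof. unfold E. rewrite <- sumR_scal. f_equal; apply map_ext; intros; ring. Qed.

Lemma E_plus p M f g : E p M (fun w => f w + g w) = E p M f + E p M g.
Proof. unfold E. rewrite <- sumR_plus. f_equal; apply map_ext; intros; ring. Qed.

Definition ind (b : bool) : R := if b then 1 else 0.

Definition Sx (phi : nat -> list bool -> R) M w :=
  sumR (map (fun n => ind (nth n w false) * phi n (skipn (S n) w)) (seq 0 M)).
Definition Tx (phi : nat -> list bool -> R) M w :=
  sumR (map (fun n => phi n (skipn (S n) w)) (seq 0 M)).
Definition Qx (phi : nat -> list bool -> R) M w :=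
  sumR (map (fun n => (phi n (skipn (S n) w))^2) (seq 0 M)).

Lemma seq0S M : seq 0 (S M) = 0%nat :: map S (seq 0 M).
Proof. simpl. rewrite seq_shift. reflexivity. Qed.

Lemma Sx_S phi M b w : Sx phi (S M) (b :: w) = ind b * phi 0%nat w + Sx (fun n => phi (S n)) M w.
Proof. unfold Sx; rewrite seq0S; simpl; rewrite map_map; reflexivity. Qed.
Lemma Tx_S phi M b w : Tx phi (S M) (b :: w) = phi 0%nat w + Tx (fun n => phi (S n)) M w.
Proof. unfold Tx; rewrite seq0S; simpl; rewrite map_map; reflexivity. Qed.
Lemma Qx_S phi M b w : Qx phi (S M) (b :: w) = (phi 0%nat w)^2 + Qx (fun n => phi (S n)) M w.
Proof. unfold Qx; rewrite seq0S; simpl; rewrite map_map; reflexivity. Qed.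

Lemma mgf p l : 0 < p < 1 -> 0 <= l -> forall M phi, (forall n v, 0 <= phi n v) ->
  E p M (fun w => exp (- l * Sx phi M w + l * p * Tx phi M w - l ^ 2 / 4 * Qx phi M w)) <= 1.
Proof.
  intros Hp Hl M. induction M as [|M IH]; intros phi Hphi.
  - unfold E, Sx, Tx, Qx; simpl. replace (- l * 0 + l * p * 0 - l * (l * 1) / 4 * 0) with 0 by ring. rewrite exp_0. lra.

  - rewrite E_S. rewrite <- !E_scal, <- E_plus.
    eapply Rle_trans; [|apply (IH (fun n => phi (S n))); auto].
    apply E_mono; [lra|]. intros w. rewrite !Sx_S, !Tx_S, !Qx_S.
    set (a := phi 0%nat w). set (S0 := Sx _ M w). set (T0 := Tx _ M w). set (Q0 := Qx _ M w).
    assert (Ha : 0 <= a) by apply Hphi.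
    pose proof (hoeff p (l * a) Hp ltac:(nra)) as Hh.
    unfold ind.
    replace (- l * (1 * a + S0) + l * p * (a + T0) - l ^ 2 / 4 * (a ^ 2 + Q0))
      with ((- (l * a)) + (l * p * a - (l * a) ^ 2 / 4) + (- l * S0 + l * p * T0 - l ^ 2 / 4 * Q0)) by field.
    replace (- l * (0 * a + S0) + l * p * (a + T0) - l ^ 2 / 4 * (a ^ 2 + Q0))
      with ((l * p * a - (l * a) ^ 2 / 4) + (- l * S0 + l * p * T0 - l ^ 2 / 4 * Q0)) by field.
    rewrite !exp_plus.
    set (G := exp (- l * S0 + l * p * T0 - l ^ 2 / 4 * Q0)).
    set (B := exp (l * p * a - (l * a) ^ 2 / 4)).
    assert (0 < G) by apply exp_pos.
    assert (HB : (p * exp (- (l * a)) + (1 - p)) * B <= 1).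
    { unfold B. set (X := - p * (l * a) + (l * a) ^ 2 / 4).
      replace (l * p * a - (l * a) ^ 2 / 4) with (- X) by (unfold X; field).
      assert (HX : exp (- X) * exp X = 1).
      { rewrite <- exp_plus. replace (- X + X) with 0 by ring. apply exp_0. }
      pose proof (exp_pos (- X)). fold X in Hh. nra. }
    nra.
Qed.

Lemma chernoff p M (phi : nat -> list bool -> R) (Sf Tf : list bool -> R) (x y K : R) :
  0 < p < 1 -> (forall n v, 0 <= phi n v) ->
  (forall w, Sf w = Sx phi M w) -> (forall w, Tf w = Tx phi M w) ->
  (forall w, Qx phi M w <= K) -> 0 < K -> x <= y ->
  E p M (fun w => if Rle_dec (Sf w) x then (if Rle_dec y (p * Tf w) then 1 else 0) else 0)
  <= exp (- (y - x) ^ 2 / K).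
Proof.
  intros Hp Hphi HS HT HQ HK Hxy.
  set (l := 2 * (y - x) / K).
  assert (Hl : 0 <= l).
  { unfold l. apply Rmult_le_pos; [lra| left; apply Rinv_0_lt_compat; lra]. }
  set (c0 := exp (l * x - l * y + l ^ 2 * K / 4)).
  assert (Hc0 : c0 = exp (- (y - x) ^ 2 / K)).
  { unfold c0, l. f_equal. field. lra. }
  rewrite <- Hc0.
  apply Rle_trans with
    (E p M (fun w => c0 * exp (- l * Sx phi M w + l * p * Tx phi M w - l ^ 2 / 4 * Qx phi M w))).
  - apply E_mono; [lra|]. intros w.
    pose proof (exp_pos (- l * Sx phi M w + l * p * Tx phi M w - l ^ 2 / 4 * Qx phi M w)).
    assert (0 < c0) by apply exp_pos.
    destruct (Rle_dec (Sf w) x) as [H1|H1]; [destruct (Rle_dec y (p * Tf w)) as [H2|H2]|]; try nra.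
    unfold c0. rewrite <- exp_plus.
    rewrite HS in H1. rewrite HT in H2. pose proof (HQ w).
    set (z := l * x - l * y + l ^ 2 * K / 4 +
      (- l * Sx phi M w + l * p * Tx phi M w - l ^ 2 / 4 * Qx phi M w)).
    assert (0 <= z).
    { unfold z. assert (0 <= l ^ 2) by nra.
      assert (l * (x - Sx phi M w) >= 0) by nra.
      assert (l * (p * Tx phi M w - y) >= 0) by nra.
      assert (l ^ 2 * (K - Qx phi M w) >= 0) by nra.
      lra. }
    pose proof (exp_ineq1_le z). lra.
  - rewrite E_scal. pose proof (mgf p l Hp Hl M phi Hphi). assert (0 < c0) by apply exp_pos. nra.
Qed.

Definition chi_sh (s : nat) (v : list bool) (a : list nat) : R :=
  fold_right (fun i acc => ind (nth (i - 1 - s) v false) * acc) 1 a.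

Lemma sublists_props k l a : In a (sublists k l) ->
  length a = k /\ incl a l /\ (StronglySorted lt l -> StronglySorted lt a).
Proof.
  revert k a. induction l as [|x l IH]; intros k a Ha.
  - destruct k; simpl in Ha; [|contradiction].
    destruct Ha as [<-|[]]. repeat split; [intros i []|constructor].
  - destruct k as [|k]; simpl in Ha.
    + destruct Ha as [<-|[]]. repeat split; [intros i []|constructor].
    + apply in_app_or in Ha. destruct Ha as [Ha|Ha].
      * apply in_map_iff in Ha. destruct Ha as [a' [<- Ha']].
        destruct (IH _ _ Ha') as [H1 [H2 H3]]. repeat split.
        -- simpl; lia.
        -- intros i [<-|Hi]; [left; auto| right; auto].
        -- intros Hs. inversion Hs; subst. constructor; [auto|].
           rewrite Forall_forall in *. intros i Hi. auto.
      * destruct (IH _ _ Ha) as [H1 [H2 H3]]. repeat split; auto.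
        -- intros i Hi; right; auto.
        -- intros Hs; inversion Hs; auto.
Qed.

Lemma seq_sorted s n : StronglySorted lt (seq s n).
Proof.
  revert s; induction n; intros s; simpl; constructor; auto.
  apply Forall_forall. intros i Hi. apply in_seq in Hi. lia.
Qed.

Lemma skipn_cons_nth (l : list nat) d : (d < length l)%nat -> skipn d l = nth d l 0%nat :: skipn (S d) l.
Proof.
  revert d; induction l as [|x l IH]; intros d Hd; simpl in *; [lia|].
  destruct d; [reflexivity|]. simpl. apply IH. lia.
Qed.

Lemma SS_skipn (l : list nat) d : StronglySorted lt l -> StronglySorted lt (skipn d l).
Proof.
  revert d; induction l as [|x l IH]; intros d Hs; destruct d; simpl; auto.
  apply IH. inversion Hs; auto.
Qed.

Lemma chi_shift w (n : nat) post : (forall i, In i post -> (S n < i)%nat) ->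
  chi_alpha w post = chi_sh (S n) (skipn (S n) w) post.
Proof.
  induction post as [|i post IH]; intros H; [reflexivity|].
  change (chi_alpha w (i :: post)) with (chi w i * chi_alpha w post).
  rewrite IH by (intros; apply H; right; auto).
  change (chi_sh (S n) (skipn (S n) w) (i :: post)) with
    (ind (nth (i - 1 - S n) (skipn (S n) w) false) * chi_sh (S n) (skipn (S n) w) post).
  f_equal. unfold chi, ind. rewrite nth_skipn.
  replace (S n + (i - 1 - S n))%nat with (i - 1)%nat by (pose proof (H i (or_introl eq_refl)); lia).
  reflexivity.
Qed.

Lemma ind_bounds b : 0 <= ind b <= 1.
Proof. destruct b; simpl; lra. Qed.

Lemma chi_alpha_bounds w a : 0 <= chi_alpha w a <= 1.
Proof. induction a; simpl; [lra|]. pose proof (ind_bounds (nth (a - 1) w false)).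
  unfold chi. change (if nth (a - 1) w false then 1 else 0) with (ind (nth (a - 1) w false)). nra. Qed.

Lemma chi_sh_bounds s v a : 0 <= chi_sh s v a <= 1.
Proof. induction a; simpl; [lra|]. pose proof (ind_bounds (nth (a - 1 - s) v false)). nra. Qed.

Lemma sum_indic0 v m s M : (m <= s)%nat ->
  sumR (map (fun n => if Nat.eqb m (S n) then v else 0) (seq s M)) = 0.
Proof.
  intros H. transitivity (sumR (map (fun _ : nat => 0) (seq s M))); [|apply sumR_zero].
  f_equal. apply map_ext_in.
  intros n Hn. apply in_seq in Hn. destruct (Nat.eqb_spec m (S n)); [lia|reflexivity].
Qed.

Lemma sum_indic v m s M : (s < m <= s + M)%nat ->
  sumR (map (fun n => if Nat.eqb m (S n) then v else 0) (seq s M)) = v.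
Proof.
  revert s; induction M; intros s H; [lia|]. simpl.
  destruct (Nat.eqb_spec m (S s)).
  - rewrite sum_indic0 by lia. ring.
  - rewrite IHM by lia. ring.
Qed.

Lemma split_sum {A} (key : A -> nat) (g : A -> R) (L : list A) M :
  (forall a, In a L -> (1 <= key a <= M)%nat) ->
  sumR (map g L) =
  sumR (map (fun n => sumR (map g (filter (fun a => Nat.eqb (key a) (S n)) L))) (seq 0 M)).
Proof.
  induction L as [|a L IH]; intros H; simpl.
  - symmetry. apply sumR_zero.
  - rewrite (sumR_ext _ (fun n => (if Nat.eqb (key a) (S n) then g a else 0) +
        sumR (map g (filter (fun a => Nat.eqb (key a) (S n)) L))) (seq 0 M)).
    2:{ intros n _. destruct (Nat.eqb (key a) (S n)); simpl; ring. }
    pose proof (H a (or_introl eq_refl)).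
    rewrite sumR_plus, sum_indic, IH; [reflexivity| |lia].
    intros; apply H; right; auto.
Qed.

Lemma sum_filter_mono {A} (g : A -> R) (P P' : A -> bool) L :
  (forall a, In a L -> P a = true -> P' a = true) -> (forall a, 0 <= g a) ->
  sumR (map g (filter P L)) <= sumR (map g (filter P' L)).
Proof.
  induction L as [|a L IH]; intros H Hg; simpl; [lra|].
  pose proof (IH (fun x Hx => H x (or_intror Hx)) Hg).
  destruct (P a) eqn:E1.
  - rewrite (H a (or_introl eq_refl) E1). simpl. lra.
  - destruct (P' a); simpl; [pose proof (Hg a)|]; lra.
Qed.

Lemma le_fold_Rmax y l : In y l -> y <= fold_right Rmax 0 l.
Proof. induction l; simpl; [intros []|]. intros [->|H]; [apply Rmax_l|].
  eapply Rle_trans; [apply IHl; auto| apply Rmax_r]. Qed.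

Lemma fold_Rmax_nonneg l : 0 <= fold_right Rmax 0 l.
Proof. induction l; simpl; [lra|]. eapply Rle_trans; [apply IHl| apply Rmax_r]. Qed.

Definition Psid N M (c : list nat -> R) d w :=
  sumR (map (fun a => c a ^ 2 * chi_alpha w (skipn d a)) (multi_indices N M)).
Definition phid N M (c : list nat -> R) d n v :=
  sumR (map (fun a => c a ^ 2 * chi_sh (S n) v (skipn (S d) a))
    (filter (fun a => Nat.eqb (nth d a 0%nat) (S n)) (multi_indices N M))).

Lemma A_props N M a : In a (multi_indices N M) ->
  length a = N /\ (forall i, In i a -> (1 <= i <= M)%nat) /\ StronglySorted lt a.
Proof.
  intros H. destruct (sublists_props _ _ _ H) as [H1 [H2 H3]].
  split; [auto|split].
  - intros j Hj. apply H2, in_seq in Hj. lia.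
  - apply H3, seq_sorted.
Qed.

Lemma post_gt N M a d : In a (multi_indices N M) -> (d < N)%nat ->
  skipn d a = nth d a 0%nat :: skipn (S d) a /\
  forall i, In i (skipn (S d) a) -> (nth d a 0%nat < i)%nat.
Proof.
  intros Ha Hd. destruct (A_props _ _ _ Ha) as [H1 [H2 H3]].
  assert (Hs : skipn d a = nth d a 0%nat :: skipn (S d) a) by (apply skipn_cons_nth; lia).
  split; auto.
  pose proof (SS_skipn a d H3) as HS. rewrite Hs in HS. inversion HS; subst.
  rewrite Forall_forall in *. auto.
Qed.

Lemma decomp_S N M c d w : (d < N)%nat -> Psid N M c d w = Sx (phid N M c d) M w.
Proof.
  intros Hd. unfold Psid, Sx.
  rewrite (split_sum (fun a => nth d a 0%nat) _ _ M).
  2:{ intros a Ha. destruct (A_props _ _ _ Ha) as [H1 [H2 H3]]. apply H2, nth_In. lia. }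
  apply sumR_ext. intros n _. unfold phid. rewrite <- sumR_scal. apply sumR_ext.
  intros a Ha. apply filter_In in Ha. destruct Ha as [Ha Heq]. apply Nat.eqb_eq in Heq.
  destruct (post_gt _ _ _ _ Ha Hd) as [Hs Hp].
  rewrite Hs, Heq in *.
  change (chi_alpha w (S n :: skipn (S d) a)) with (chi w (S n) * chi_alpha w (skipn (S d) a)).
  rewrite (chi_shift w n) by auto.
  unfold chi, ind. replace (S n - 1)%nat with n by lia. ring.
Qed.

Lemma decomp_T N M c d w : (d < N)%nat -> Psid N M c (S d) w = Tx (phid N M c d) M w.
Proof.
  intros Hd. unfold Psid, Tx.
  rewrite (split_sum (fun a => nth d a 0%nat) _ _ M).
  2:{ intros a Ha. destruct (A_props _ _ _ Ha) as [H1 [H2 H3]]. apply H2, nth_In. lia. }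
  apply sumR_ext. intros n _. unfold phid. apply sumR_ext.
  intros a Ha. apply filter_In in Ha. destruct Ha as [Ha Heq]. apply Nat.eqb_eq in Heq.
  destruct (post_gt _ _ _ _ Ha Hd) as [Hs Hp].
  rewrite Heq in Hp.
  rewrite (chi_shift w n) by auto. reflexivity.
Qed.

Lemma phid_nonneg N M c d n v : 0 <= phid N M c d n v.
Proof.
  unfold phid. apply sumR_nonneg. intros a _.
  pose proof (chi_sh_bounds (S n) v (skipn (S d) a)). pose proof (pow2_ge_0 (c a)). nra.
Qed.

Lemma phid_le N M c d n v : (d < N)%nat -> (n < M)%nat -> phid N M c d n v <= delta2 N M c.
Proof.
  intros Hd Hn. unfold phid.
  eapply Rle_trans.
  { apply (sumR_le _ (fun a => c a ^ 2)). intros a _.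
    pose proof (chi_sh_bounds (S n) v (skipn (S d) a)). pose proof (pow2_ge_0 (c a)). nra. }
  eapply Rle_trans.
  { apply (sum_filter_mono _ _ (fun a => existsb (Nat.eqb (S n)) a)).
    - intros a Ha Heq. apply Nat.eqb_eq in Heq. apply existsb_exists.
      exists (S n). split; [|apply Nat.eqb_refl]. rewrite <- Heq. apply nth_In.
      destruct (A_props _ _ _ Ha) as [H1 _]. lia.
    - intros a; apply pow2_ge_0. }
  unfold delta2. apply le_fold_Rmax. apply in_map_iff. exists (S n). split; [reflexivity|].
  apply in_seq. lia.
Qed.

Lemma Psid_bounds N M c d w : 0 <= Psid N M c d w <= normc2 N M c.
Proof.
  unfold Psid, normc2. split.
  - apply sumR_nonneg. intros a _. pose proof (chi_alpha_bounds w (skipn d a)).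
    pose proof (pow2_ge_0 (c a)). nra.
  - apply sumR_le. intros a _. pose proof (chi_alpha_bounds w (skipn d a)).
    pose proof (pow2_ge_0 (c a)). nra.
Qed.

Lemma Psid_N N M c w : Psid N M c N w = normc2 N M c.
Proof.
  unfold Psid, normc2. apply sumR_ext. intros a Ha.
  destruct (A_props _ _ _ Ha) as [H1 _]. rewrite skipn_all2 by lia. simpl. ring.
Qed.

Lemma Qx_bound N M c d w : (d < N)%nat ->
  Qx (phid N M c d) M w <= delta2 N M c * normc2 N M c.
Proof.
  intros Hd. eapply Rle_trans.
  { apply (sumR_le _ (fun n => delta2 N M c * phid N M c d n (skipn (S n) w))).
    intros n Hn. apply in_seq in Hn.
    pose proof (phid_nonneg N M c d n (skipn (S n) w)).
    pose proof (phid_le N M c d n (skipn (S n) w) Hd ltac:(lia)). nra. }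
  rewrite sumR_scal. fold (Tx (phid N M c d) M w). rewrite <- decomp_T by auto.
  pose proof (Psid_bounds N M c (S d) w).
  pose proof (fold_Rmax_nonneg (map (fun n => sumR (map (fun a => (c a)^2)
                        (filter (fun a => existsb (Nat.eqb n) a) (multi_indices N M))))
         (seq 1 M))).
  fold (delta2 N M c) in H0. nra.
Qed.

Definition Pd p N M c d z :=
  E p M (fun w => if Rle_dec (Psid N M c d w) z then 1 else 0).

Lemma chain p N M c : 0 < p < 1 -> 0 < delta2 N M c * normc2 N M c ->
  forall j d z, (d + j = N)%nat -> 0 <= z -> (2 / p) ^ j * z < normc2 N M c ->
  Pd p N M c d z <= INR j * exp (- z ^ 2 / (delta2 N M c * normc2 N M c)).
Proof.
  intros Hp HK j. induction j as [|j IH]; intros d z Hdj Hz Hlt.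
  - replace d with N by lia. unfold Pd. simpl INR. rewrite Rmult_0_l.
    apply Rle_trans with (E p M (fun _ => 0)); [|rewrite E_const; lra].
    apply E_mono; [lra|]. intros w. rewrite Psid_N. simpl in Hlt.
    destruct (Rle_dec _ _); lra.
  - set (K := delta2 N M c * normc2 N M c) in *.
    assert (Hd : (d < N)%nat) by lia.
    assert (Hq : 0 < / p) by (apply Rinv_0_lt_compat; lra).
    assert (Hpq : p * / p = 1) by (field; lra).
    unfold Pd.
    apply Rle_trans with
      (E p M (fun w => if Rle_dec (Psid N M c d w) z then
                         (if Rle_dec (2 * z) (p * Psid N M c (S d) w) then 1 else 0) else 0)
       + E p M (fun w => if Rle_dec (Psid N M c (S d) w) (2 * z / p) then 1 else 0)).
    + rewrite <- E_plus. apply E_mono; [lra|]. intros w.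
      destruct (Rle_dec (Psid N M c d w) z); [|destruct (Rle_dec _ (2 * z / p)); lra].
      destruct (Rle_dec (2 * z) _); [destruct (Rle_dec _ (2 * z / p)); lra|].
      destruct (Rle_dec (Psid N M c (S d) w) (2 * z / p)) as [|Hn]; [lra|].
      exfalso. apply Hn. unfold Rdiv.
      pose proof (Psid_bounds N M c (S d) w). nra.
    + pose proof (chernoff p M (phid N M c d) (Psid N M c d) (Psid N M c (S d)) z (2 * z) K Hp
        (phid_nonneg N M c d) (fun w => decomp_S N M c d w Hd) (fun w => decomp_T N M c d w Hd)
        (fun w => Qx_bound N M c d w Hd) HK ltac:(lra)) as H1.
      assert (Hz' : 0 <= 2 * z / p) by (unfold Rdiv; nra).
      pose proof (IH (S d) (2 * z / p) ltac:(lia) Hz') as H2.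
      assert (H2' : (2 / p) ^ j * (2 * z / p) < normc2 N M c).
      { simpl in Hlt. replace ((2 / p) ^ j * (2 * z / p)) with (2 / p * (2 / p) ^ j * z)
          by (field; lra). exact Hlt. }
      specialize (H2 H2'). fold (Pd p N M c (S d) (2 * z / p)).
      assert (Hexp : exp (- (2 * z / p) ^ 2 / K) <= exp (- z ^ 2 / K)).
      { apply exp_le. unfold Rdiv. apply Rmult_le_compat_r; [left; apply Rinv_0_lt_compat; lra|].
        apply Ropp_le_contravar. assert (z <= 2 * z * / p).
        { assert (1 <= 2 * / p).
          { apply Rmult_le_reg_l with p; [lra|]. rewrite <- Rmult_assoc, (Rmult_comm p 2),
              Rmult_assoc, Hpq. lra. }
          nra. }
        nra. }
      replace (2 * z - z) with z in H1 by ring.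
      rewrite S_INR. pose proof (pos_INR j). pose proof (exp_pos (- z ^ 2 / K)).
      assert (INR j * exp (- (2 * z / p) ^ 2 / K) <= INR j * exp (- z ^ 2 / K)) by nra.
      lra.
Qed.

Theorem lemmaA1 (p : R) (N M : nat) (c : list nat -> R) (x : R) :
  0 < p < 1 ->
  (1 <= N)%nat ->
  (* c is supported on multi-indices with entries in 1..M *)
  (forall a, valid_index N a -> (exists i, In i a /\ (M < i)%nat) -> c a = 0) ->
  0 < deltaN N M c ->
  x < (p / 2) ^ N * normc2 N M c ->
  prob_Psi_le p N M c x
    <= 2 * exp 3 / 9 * INR N
       * exp (- (x ^ 2) / ((deltaN N M c) ^ 2 * normc2 N M c)).
Proof.
  intros Hp HN _ Hdel Hx.
  assert (He3 : 1 <= 2 * exp 3 / 9).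
  { replace 3 with (3/2 + 3/2) by field. rewrite exp_plus.
    pose proof (exp_ineq1_le (3/2)). nra. }
  assert (HD2 : deltaN N M c ^ 2 = delta2 N M c).
  { unfold deltaN. apply pow2_sqrt. unfold delta2. apply fold_Rmax_nonneg. }
  assert (HD2pos : 0 < delta2 N M c) by (rewrite <- HD2; nra).
  assert (Hprob : prob_Psi_le p N M c x = Pd p N M c 0 x) by reflexivity.
  pose proof (pos_INR N). pose proof (exp_pos (- (x ^ 2) / ((deltaN N M c) ^ 2 * normc2 N M c))).
  pose proof (exp_pos 3).
  destruct (Rlt_le_dec x 0) as [Hneg|Hpos].
  - rewrite Hprob. unfold Pd.
    apply Rle_trans with (E p M (fun _ => 0)).
    + apply E_mono; [lra|]. intros w. pose proof (Psid_bounds N M c 0 w).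
      destruct (Rle_dec _ _); lra.
    + rewrite E_const. apply Rmult_le_pos; [|lra]. apply Rmult_le_pos; [|lra]. lra.
  - assert (HpN : 0 < (p / 2) ^ N) by (apply pow_lt; lra).
    assert (HC : 0 < normc2 N M c).
    { destruct (Rlt_le_dec 0 (normc2 N M c)); auto. nra. }
    assert (Hlt : (2 / p) ^ N * x < normc2 N M c).
    { assert (Hm : (2 / p) ^ N * (p / 2) ^ N = 1).
      { rewrite <- Rpow_mult_distr. replace (2 / p * (p / 2)) with 1 by (field; lra). apply pow1. }
      assert (0 < (2 / p) ^ N) by (apply pow_lt; unfold Rdiv; apply Rmult_lt_0_compat; [lra|apply Rinv_0_lt_compat; lra]).
      nra. }
    rewrite Hprob, HD2.
    pose proof (chain p N M c Hp ltac:(nra) N 0 x ltac:(lia) Hpos Hlt) as Hch.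
    pose proof (exp_pos (- x ^ 2 / (delta2 N M c * normc2 N M c))).
    replace (- (x ^ 2)) with (- x ^ 2) by ring.
    eapply Rle_trans; [exact Hch|].
    set (e := exp (- x ^ 2 / (delta2 N M c * normc2 N M c))) in *.
    assert (0 <= INR N * e) by nra.
    assert (0 <= (2 * exp 3 / 9 - 1) * (INR N * e)) by (apply Rmult_le_pos; lra).
    lra.
Qed.
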